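(* Let $n \geq 2$ be an integer. There exists a greatest integer $w$ such that there is an S-template with width $w$ and $n$ colors; denote it $S^+(n)$. Moreover, $$2S(n-1)+1 \leq S^+(n) \leq S(n).$$
   Context: A set $A \subseteq \mathbb{N}$ is sum-free if for all $(a,b)\in A^2$ (allowing $a=b$), $a+b \notin A$. For $n\ge 1$, the Schur number $S(n)$ is the largest integer $p$ such that $\{1,\dots,p\}$ can be partitioned into $n$ sum-free subsets. For positive integers $p,n$, an S-template with $n$ colors and width $p$ is a partition of $\{1,\dots,p\}$ into $n$ sum-free subsets $A_1,\dots,A_n$ such that for every $i \in \{1,\dots,n-1\}$ (i.e. every subset except $A_n$) and all $(x,y)\in A_i^2$: if $x+y>p$ then $x+y-p \notin A_i$. *)

(* Defs.v *)
From Stdlib Require Import Arith Lia.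

Definition sum_free (A : nat -> Prop) : Prop :=
  forall a b, A a -> A b -> ~ A (a + b).

Definition block (p : nat) (c : nat -> nat) (i : nat) : nat -> Prop :=
  fun x => 1 <= x <= p /\ c x = i.

Definition sum_free_partition (n p : nat) (c : nat -> nat) : Prop :=
  (forall x, 1 <= x <= p -> c x < n) /\
  (forall i, i < n -> sum_free (block p c i)).

Definition schur_partitionable (n p : nat) : Prop :=
  exists c, sum_free_partition n p c.

Definition is_schur_number (n s : nat) : Prop :=
  schur_partitionable n s /\ (forall p, schur_partitionable n p -> p <= s).

(* S-template with n colours and width p: a sum-free partition such that for
   every colour i except the last one (i.e. i < n-1, the paper's A_1..A_{n-1};
   the colour n-1 plays the role of A_n) and all x, y in A_i with x + y > p,
   x + y - p is not in A_i. *)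
Definition S_template (n p : nat) (c : nat -> nat) : Prop :=
  sum_free_partition n p c /\
  (forall i, i < n - 1 ->
     forall x y, block p c i x -> block p c i y -> p < x + y ->
       ~ block p c i (x + y - p)).

Definition has_S_template (n p : nat) : Prop := exists c, S_template n p c.

(* Main.v *)
Require Import Defs.
From Stdlib Require Import List Arith Lia Classical.
Import ListNotations.

Fixpoint dec (l : list nat) : Prop :=
  match l with
  | [] => True
  | x :: l' => (forall y, In y l' -> y < x) /\ dec l'
  end.

Lemma dec_filter (f : nat -> bool) : forall l, dec l -> dec (filter f l).
Proof.
  induction l as [|x l IH]; simpl; auto.
  intros [H1 H2]. destruct (f x); simpl; auto.
  split; auto. intros y Hy. apply filter_In in Hy. apply H1; tauto.
Qed.

Lemma filter_filter_le (g h : nat -> bool) : forall l,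
  length (filter g (filter h l)) <= length (filter g l).
Proof.
  induction l as [|x l IH]; simpl; auto.
  destruct (h x); simpl; destruct (g x); simpl; lia.
Qed.

Lemma pigeon (f : nat -> nat) (k : nat) : forall u l,
  (forall x, In x l -> In (f x) u) -> length u * k < length l ->
  exists a, In a u /\ k < length (filter (fun x => Nat.eqb (f x) a) l).
Proof.
  induction u as [|a u IH]; intros l Hl Hlen.
  - destruct l as [|x l]; simpl in Hlen; [lia|]. destruct (Hl x); simpl; auto.
  - destruct (Nat.lt_ge_cases k (length (filter (fun x => Nat.eqb (f x) a) l))) as [H|H].
    + exists a; split; simpl; auto.
    + set (l2 := filter (fun x => negb (Nat.eqb (f x) a)) l).
      assert (E := filter_length (fun x => Nat.eqb (f x) a) l).
      destruct (IH l2) as [b [Hb Hk]].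
      * intros x Hx. unfold l2 in Hx. apply filter_In in Hx. destruct Hx as [Hx Hne].
        destruct (Hl x Hx) as [Heq|Hin]; auto.
        subst. rewrite Nat.eqb_refl in Hne. discriminate.
      * simpl in Hlen. unfold l2. lia.
      * exists b; split; [simpl; auto|].
        unfold l2 in Hk. pose proof (filter_filter_le (fun x => Nat.eqb (f x) b) (fun x => negb (Nat.eqb (f x) a)) l). lia.
Qed.

Fixpoint g (r : nat) : nat :=
  match r with
  | 0 => 2
  | S r' => S (S r' * g r')
  end.

Lemma g_ge2 : forall r, 2 <= g r.
Proof. induction r; simpl; lia. Qed.

Section Schur.
Variables (n p : nat) (c : nat -> nat).
Hypothesis Hc : sum_free_partition n p c.

Lemma schur_main : forall r u l,
  length u <= r -> (forall a, In a u -> a < n) -> dec l ->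
  (forall x, In x l -> x <= p) ->
  (forall x y, In x l -> In y l -> x < y -> In (c (y - x)) u) ->
  g r <= length l -> False.
Proof.
  induction r as [|r IH]; intros u l Hu Hun Hd Hp HI Hlen.
  - destruct u; [|simpl in Hu; lia].
    destruct l as [|x [|y l]]; simpl in Hlen; try lia.
    destruct Hd as [Hd1 _]. assert (y < x) by (apply Hd1; simpl; auto).
    apply (HI y x); simpl; auto.
  - destruct l as [|M l']; [simpl in Hlen; pose proof (g_ge2 (S r)); lia|].
    destruct Hd as [HdM Hd'].
    pose proof (g_ge2 r) as Hg.
    destruct (pigeon (fun x => c (M - x)) (g r - 1) u l') as [a [Ha Hk]].
    + intros x Hx. apply HI; simpl; auto.
    + simpl in Hlen. assert (length u * (g r - 1) <= S r * (g r - 1)) by (apply Nat.mul_le_mono_r; lia).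
      nia.
    + set (la := filter (fun x => Nat.eqb (c (M - x)) a) l') in *.
      apply (IH (remove Nat.eq_dec a u) la).
      * pose proof (remove_length_lt Nat.eq_dec u a Ha). lia.
      * intros b Hb. apply in_remove in Hb. apply Hun; tauto.
      * apply dec_filter; auto.
      * intros x Hx. unfold la in Hx. apply filter_In in Hx. apply Hp; simpl; tauto.
      * intros x y Hx Hy Hxy. unfold la in Hx, Hy. apply filter_In in Hx, Hy.
        destruct Hx as [Hx Hcx]. destruct Hy as [Hy Hcy].
        apply Nat.eqb_eq in Hcx, Hcy.
        apply in_in_remove.
        -- intro Heq.
           assert (HxM : x < M) by auto. assert (HyM : y < M) by auto.
           assert (HMp : M <= p) by (apply Hp; simpl; auto).
           destruct Hc as [_ Hsf].
           apply (Hsf a (Hun a Ha) (M - y) (y - x)).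
           ++ split; [lia|auto].
           ++ split; [lia|auto].
           ++ replace (M - y + (y - x)) with (M - x) by lia. split; [lia|auto].
        -- apply HI; simpl; auto.
      * lia.
Qed.

Fixpoint down (k : nat) : list nat :=
  match k with
  | 0 => [0]
  | S k' => k :: down k'
  end.

Lemma down_le : forall k x, In x (down k) -> x <= k.
Proof. induction k; simpl; intros x H; destruct H as [H|H]; try lia; try contradiction. specialize (IHk x H). lia. Qed.

Lemma down_dec : forall k, dec (down k).
Proof. induction k; simpl. - split; auto; intros y []. - split; auto. intros y Hy. apply down_le in Hy. lia. Qed.

Lemma down_len : forall k, length (down k) = S k.
Proof. induction k; simpl; auto. Qed.

Lemma schur_bound : p < g n.
Proof.
  destruct (Nat.lt_ge_cases p (g n)) as [H|H]; auto. exfalso.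
  apply (schur_main n (seq 0 n) (down p)).
  - rewrite length_seq; auto.
  - intros a Ha. apply in_seq in Ha. lia.
  - apply down_dec.
  - apply down_le.
  - intros x y Hx Hy Hxy. apply in_seq. apply down_le in Hy.
    destruct Hc as [Hcol _]. specialize (Hcol (y - x)). lia.
  - rewrite down_len. lia.
Qed.
End Schur.

Lemma max_exists (P : nat -> Prop) : forall B,
  (exists p, P p) -> (forall p, P p -> p <= B) ->
  exists w, P w /\ (forall p, P p -> p <= w).
Proof.
  induction B as [|B IH]; intros [p0 H0] Hb.
  - exists p0. split; auto. intros p Hp. pose proof (Hb p Hp). pose proof (Hb p0 H0). lia.
  - destruct (classic (P (S B))) as [HS|HS].
    + exists (S B); auto.
    + apply IH; [exists p0; auto|].
      intros p Hp. specialize (Hb p Hp). destruct (Nat.eq_dec p (S B)); [subst; contradiction|lia].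
Qed.

Theorem proposition2p2 (n : nat) (Hn : 2 <= n) :
  exists w : nat,
    (has_S_template n w /\ (forall p, has_S_template n p -> p <= w)) /\
    (forall s1 s, is_schur_number (n - 1) s1 -> is_schur_number n s ->
       2 * s1 + 1 <= w <= s).
Proof.
  destruct (max_exists (has_S_template n) (g n)) as [w [Hw Hmax]].
  - exists 0. exists (fun _ => 0). split; [split|].
    + intros x Hx; lia.
    + intros i Hi a b [Ha _]; lia.
    + intros i Hi x y [Hx _]; lia.
  - intros p [c [Hc _]]. pose proof (schur_bound n p c Hc). lia.
  - exists w. split; [split; auto|].
    intros s1 s [[c1 [Hc1a Hc1b]] _] [_ Hs].
    split.
    + apply Hmax.
      exists (fun x => if x <=? s1 then c1 x else n - 1).
      split; [split|].
      * intros x Hx. destruct (x <=? s1) eqn:E.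
        -- apply Nat.leb_le in E. specialize (Hc1a x). lia.
        -- lia.
      * intros i Hi a b [Ha Hca] [Hb Hcb] [Hab Hcab].
        destruct (a <=? s1) eqn:Ea, (b <=? s1) eqn:Eb; 
          try apply Nat.leb_le in Ea; try apply Nat.leb_le in Eb;
          try apply Nat.leb_gt in Ea; try apply Nat.leb_gt in Eb.
        -- destruct (a + b <=? s1) eqn:Eab.
           ++ apply Nat.leb_le in Eab.
              assert (i < n - 1) by (specialize (Hc1a a); lia).
              apply (Hc1b i H a b); split; auto; lia.
           ++ apply Nat.leb_gt in Eab. specialize (Hc1a a). lia.
        -- specialize (Hc1a a). lia.
        -- specialize (Hc1a b). lia.
        -- lia.
      * intros i Hi x y [Hx Hcx] [Hy Hcy] Hxy.
        destruct (x <=? s1) eqn:Ex, (y <=? s1) eqn:Ey;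
          try apply Nat.leb_le in Ex; try apply Nat.leb_le in Ey;
          try apply Nat.leb_gt in Ex; try apply Nat.leb_gt in Ey; lia.
    + apply Hs. destruct Hw as [c [Hc _]]. exists c; auto.
Qed.
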